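(* Let $p$ be an even integer and let $n$ be an odd integer with $n\ge p+1\ge 5$. Then there exists a simple graph of order $n$ and size $\mathrm{ex}(n,K_{1,p})+1$ which contains exactly one copy of $K_{1,p}$.
   Context: All graphs are finite and simple. The order of a graph is its number of vertices and its size is its number of edges. A copy of $H$ in $G$ is a subgraph of $G$ isomorphic to $H$; the number of copies of $H$ in $G$ is the number of distinct subgraphs of $G$ isomorphic to $H$. For a graph $H$ and a positive integer $n$, the Turán number $\mathrm{ex}(n,H)$ is the maximum size of a simple graph of order $n$ containing no copy of $H$. $K_{1,p}$ denotes the star with $p$ edges (order $p+1$). *)

(* Defs.v *)
From mathcomp Require Import all_boot.
Set Implicit Arguments.
Unset Strict Implicit.
Unset Printing Implicit Defensive.

Definition simple_graph (T : finType) (e : rel T) : bool :=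
  [forall x, ~~ e x x] && [forall x, [forall y, e x y == e y x]].

Definition edges (T : finType) (e : rel T) : {set {set T}} :=
  [set [set x; y] | x in T, y in T & e x y].

Definition gsize (T : finType) (e : rel T) : nat := #|edges e|.

Definition is_copy (TH : finType) (eH : rel TH) (T : finType) (e : rel T)
    (W : {set T}) (F : {set {set T}}) : bool :=
  (F \subset edges e) &&
  [exists f : {ffun TH -> T},
     [&& injectiveb f, W == f @: TH &
         F == [set [set f x; f y] | x in TH, y in TH & eH x y]]].

Definition ncopies (TH : finType) (eH : rel TH) (T : finType) (e : rel T) : nat :=
  #|[set WF : {set T} * {set {set T}} | is_copy eH e WF.1 WF.2]|.

(* Graphs of order n are encoded as relations on 'I_n (via finite functions,
   so that one can range over all of them). *)
Definition rel_of (n : nat) (g : {ffun 'I_n * 'I_n -> bool}) : rel 'I_n :=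
  fun x y => g (x, y).

Definition ex (n : nat) (TH : finType) (eH : rel TH) : nat :=
  \max_(g : {ffun 'I_n * 'I_n -> bool} |
          simple_graph (rel_of g) && (ncopies eH (rel_of g) == 0))
     gsize (rel_of g).

Definition star_rel (p : nat) : rel 'I_p.+1 :=
  fun i j => (i != j) && ((i == ord0) || (j == ord0)).
Arguments star_rel p : clear implicits.

(* Main.v *)
Require Import Defs.
From mathcomp Require Import all_boot.
From mathcomp Require Import zify.

Module Aux.
Set Implicit Arguments. Unset Strict Implicit. Unset Printing Implicit Defensive.

Section Gen.
Variable T : finType.
Variable e : rel T.
Hypothesis He : simple_graph e.

Definition deg x := #|[set y | e x y]|.

Lemma irr x : e x x = false.
Proof. by move: He => /andP[/forallP /(_ x) /negbTE ->]. Qed.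
Lemma sym x y : e x y = e y x.
Proof. by move: He => /andP[_ /forallP /(_ x) /forallP /(_ y) /eqP]. Qed.

Lemma set2_eq (a b x y : T) : [set x; y] = [set a; b] -> x != y ->
  (x = a /\ y = b) \/ (x = b /\ y = a).
Proof.
move=> E nxy.
have xin : x \in [set a; b] by rewrite -E set21.
have yin : y \in [set a; b] by rewrite -E set22.
move: xin yin => /set2P[Ex|Ex] /set2P[Ey|Ey]; subst x y; try by [left|right].
all: by rewrite eqxx in nxy.
Qed.

Lemma edge_adj u v : [set u; v] \in edges e -> u != v -> e u v.
Proof.
case/imset2P => a b _; rewrite !inE /= => eab E nuv.
by case: (set2_eq E nuv) => [[-> ->]|[-> ->]] //; rewrite sym.
Qed.

Lemma adj_edge u v : e u v -> [set u; v] \in edges e.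
Proof. by move=> h; apply/imset2P; exists u v; rewrite ?inE. Qed.

Lemma adj_neq u v : e u v -> u != v.
Proof. by apply: contraTneq => ->; rewrite irr. Qed.

Lemma handshake : \sum_x deg x = (gsize e).*2.
Proof.
have -> : \sum_x deg x = \sum_(xy : T * T | e xy.1 xy.2) 1.
  rewrite -(pair_big_dep predT (fun x y => e x y) (fun _ _ => 1)) /=.
  by apply: eq_bigr => x _; rewrite sum1dep_card.
rewrite (partition_big (fun xy : T * T => [set xy.1; xy.2]) (mem (edges e))) /=;
  last by case=> x y /= h; apply: adj_edge.
rewrite -muln2 /gsize -sum_nat_const; apply: eq_bigr => E.
case/imset2P => a b _; rewrite !inE /= => eab ->.
rewrite sum1dep_card.
have -> : [set x : T * T | e x.1 x.2 && ([set x.1; x.2] == [set a; b])]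
        = [set (a, b); (b, a)].
  apply/setP => -[x y]; rewrite !inE /=.
  apply/idP/idP.
  - case/andP => exy /eqP Exy.
    by case: (set2_eq Exy (adj_neq exy)) => [[-> ->]|[-> ->]]; rewrite eqxx ?orbT.
  - case/orP => /eqP [-> ->]; rewrite ?eab ?eqxx //=.
    by rewrite sym eab setUC eqxx.
rewrite cards2; case: eqP => // [[Eab _]]; subst b; by rewrite irr in eab.
Qed.

End Gen.

Section Star.
Variable T : finType.
Variable e : rel T.
Hypothesis He : simple_graph e.
Variable p : nat.

Lemma copy_adj (f : {ffun 'I_p.+1 -> T}) (F : {set {set T}}) :
  injective f -> F \subset edges e ->
  F = [set [set f x; f y] | x in 'I_p.+1, y in 'I_p.+1 & star_rel p x y] ->
  forall i, i != ord0 -> e (f ord0) (f i).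
Proof.
move=> injf sF EF i ni0.
apply: (edge_adj He); last by rewrite (inj_eq injf) eq_sym.
apply: (subsetP sF); rewrite EF; apply/imset2P; exists ord0 i => //.
by rewrite !inE /star_rel eq_sym ni0 eqxx.
Qed.

Lemma card_nz : #|[set i : 'I_p.+1 | i != ord0]| = p.
Proof.
have -> : [set i : 'I_p.+1 | i != ord0] = [set~ ord0] by apply/setP=> i; rewrite !inE.
by rewrite cardsC1 card_ord.
Qed.

Lemma copy_center W F : is_copy (star_rel p) e W F ->
  exists f : {ffun 'I_p.+1 -> T},
   [/\ injective f, W = f @: 'I_p.+1,
       F = [set [set f x; f y] | x in 'I_p.+1, y in 'I_p.+1 & star_rel p x y],
       f @: [set i | i != ord0] \subset [set y | e (f ord0) y] &
       p <= deg e (f ord0)].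
Proof.
case/andP=> sF /existsP[f /and3P[/injectiveP injf /eqP EW /eqP EF]].
have sub : f @: [set i | i != ord0] \subset [set y | e (f ord0) y].
  apply/subsetP=> y /imsetP[i]; rewrite inE => ni0 ->; rewrite inE.
  exact: (copy_adj injf sF EF).
exists f; split=> //.
rewrite /deg; apply: leq_trans (subset_leq_card sub).
by rewrite (card_imset _ injf) card_nz.
Qed.

Lemma nz_pred (i : 'I_p.+1) : i != ord0 -> i.-1 < p /\ 0 < i.
Proof.
move=> ni; have : (i : nat) != 0 by rewrite -[0]/(val (@ord0 p)) (inj_eq val_inj).
have := ltn_ord i; lia.
Qed.

Lemma copy_exists c : p <= deg e c ->
  exists WF : {set T} * {set {set T}}, is_copy (star_rel p) e WF.1 WF.2.
Proof.
move=> hc.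
set s := enum [set y | e c y].
have ss : size s = deg e c by rewrite /s -cardE.
have ns : forall j, j < p -> e c (nth c s j).
  move=> j hj; have : nth c s j \in s by apply: mem_nth; rewrite ss; lia.
  by rewrite /s mem_enum inE.
pose f := [ffun i : 'I_p.+1 => if i == ord0 then c else nth c s i.-1].
have injf : injective f.
  move=> i j; rewrite !ffunE.
  case: (eqVneq i ord0) => [->|ni]; case: (eqVneq j ord0) => [->|nj] //.
  - move=> E; have [h1 _] := nz_pred nj.
    by have := ns _ h1; rewrite -E irr.
  - move=> E; have [h1 _] := nz_pred ni.
    by have := ns _ h1; rewrite E irr.
  - have [hi1 hi2] := nz_pred ni; have [hj1 hj2] := nz_pred nj.
    move/eqP; rewrite nth_uniq ?enum_uniq ?ss; try lia.
    move=> /eqP E; apply: val_inj => /=; lia.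
exists (f @: 'I_p.+1, [set [set f x; f y] | x in 'I_p.+1, y in 'I_p.+1 & star_rel p x y]).
apply/andP; split; last first.
  apply/existsP; exists f; rewrite !eqxx !andbT; exact/injectiveP.
rewrite /=; apply/subsetP=> E /imset2P[x y _]; rewrite !inE /= /star_rel => /andP[nxy h0] ->.
apply: adj_edge.
have key : forall i, i != ord0 -> e (f ord0) (f i).
  move=> i ni; rewrite !ffunE eqxx (negbTE ni); apply: ns.
  by have [] := nz_pred ni.
case/orP: h0 => /eqP E0; subst.
- by apply: key; rewrite eq_sym.
- by rewrite (sym He); apply: key.
Qed.


Lemma copies_canon c W F : (forall v, p <= deg e v -> v = c) -> deg e c = p ->
  is_copy (star_rel p) e W F ->
  W = c |: [set y | e c y] /\ F = [set [set c; v] | v in [set y | e c y]].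
Proof.
move=> uc dc /copy_center[f [injf -> -> sub hd]].
have f0 : f ord0 = c by apply: uc.
have EN : f @: [set i | i != ord0] = [set y | e c y].
  apply/eqP; rewrite eqEcard -f0 sub /=.
  by rewrite (card_imset _ injf) card_nz -/(deg e (f ord0)) f0 dc.
split; apply/setP => v.
- apply/imsetP/setU1P.
  + case=> i _ ->; case: (eqVneq i ord0) => [->|ni]; first by left.
    by right; rewrite -EN; apply: imset_f; rewrite inE.
  + case=> [->|]; first by exists ord0.
    by rewrite -EN => /imsetP[i _ ->]; exists i.
- apply/imset2P/imsetP.
  + case=> x y _; rewrite !inE /star_rel => /andP[_ /andP[nxy h0]] ->.
    case/orP: h0 => /eqP E0; subst.
    * exists (f y); last by rewrite f0.
      by rewrite -EN; apply: imset_f; rewrite inE eq_sym.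
    * exists (f x); last by rewrite f0 setUC.
      by rewrite -EN; apply: imset_f; rewrite inE.
  + case=> w; rewrite -EN => /imsetP[i]; rewrite inE => ni -> ->.
    by exists ord0 i; rewrite // -?f0 // !inE /star_rel eq_sym ni eqxx.
Qed.

Lemma ncopies_one c : (forall v, p <= deg e v -> v = c) -> deg e c = p ->
  ncopies (star_rel p) e = 1.
Proof.
move=> uc dc.
have [WF0 h0] : exists WF : {set T} * {set {set T}}, is_copy (star_rel p) e WF.1 WF.2.
  by apply: (copy_exists (c := c)); rewrite dc.
rewrite /ncopies.
have -> : [set WF : {set T} * {set {set T}} | is_copy (star_rel p) e WF.1 WF.2] = [set WF0].
  apply/setP=> -[W F]; rewrite !inE; apply/idP/eqP.
  - move=> /= h; case: WF0 h0 => W0 F0 /= h0.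
    have [-> ->] := copies_canon uc dc h.
    by have [-> ->] := copies_canon uc dc h0.
  - by move=> ->.
exact: cards1.
Qed.

Lemma ncopies0_deg : ncopies (star_rel p) e = 0 -> forall v, deg e v < p.
Proof.
move=> h v; rewrite ltnNge; apply/negP => /copy_exists[WF hWF].
move: h; rewrite /ncopies => /eqP; rewrite cards_eq0 => /eqP E.
by have := in_set0 WF; rewrite -E inE hWF.
Qed.

Lemma deg_ncopies0 : (forall v, deg e v < p) -> ncopies (star_rel p) e = 0.
Proof.
move=> h; rewrite /ncopies; apply/eqP; rewrite cards_eq0; apply/eqP/setP => -[W F].
rewrite !inE; apply/negP => /copy_center[f [_ _ _ _ hd]].
by have := h (f ord0); lia.
Qed.

End Star.

Lemma card_nat_pred n (P : pred nat) : #|[set z : 'I_n | P z]| = count P (iota 0 n).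
Proof.
rewrite -sum1dep_card -sum1_count.
by rewrite -(big_mkord (fun i => P i) (fun _ => 1)) /index_iota subn0.
Qed.

Lemma count_all (P : pred nat) m k : (forall i, m <= i < m + k -> P i) -> count P (iota m k) = k.
Proof.
move=> h; rewrite (eq_in_count (a2 := predT)) ?count_predT ?size_iota //.
by move=> i; rewrite mem_iota => /h.
Qed.

Lemma count_none (P : pred nat) m k : (forall i, m <= i < m + k -> ~~ P i) -> count P (iota m k) = 0.
Proof.
move=> h; rewrite (eq_in_count (a2 := pred0)) ?count_pred0 //.
by move=> i; rewrite mem_iota => /h /negbTE.
Qed.

Section Conc.
Variables n h : nat.
Hypothesis nodd : odd n.
Hypothesis h2 : 2 <= h.
Hypothesis hn : h.*2 < n.

Definition dd (x y : nat) := if y <= x then x - y else x + n - y.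
Definition Dp (z : nat) := (0 < z) && ((z <= h) || (n - h <= z)).
Definition mt (x y : nat) := (odd x && (y == x.+1)) || (odd y && (x == y.+1)).

Lemma count_Dp : count Dp (iota 0 n) = h.*2.
Proof.
have -> : n = h.+1 + (n - h.*2 - 1) + h by lia.
rewrite !iotaD !count_cat.
rewrite (count_all (m := 0 + (h.+1 + (n - h.*2 - 1)))); last first.
  move=> i hi; rewrite /Dp; lia.
rewrite (count_none (m := 0 + h.+1)); last first.
  move=> i hi; rewrite /Dp; lia.
rewrite /= add0n (count_all (m := 1)); last first.
  move=> i hi; rewrite /Dp; lia.
rewrite /Dp /=; lia.
Qed.


Lemma dd_lt x y : x < n -> y < n -> dd x y < n.
Proof. rewrite /dd; case: ifP; lia. Qed.

Lemma card_Dp (x : 'I_n) : #|[set y : 'I_n | Dp (dd x y)]| = h.*2.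
Proof.
pose g (y : 'I_n) : 'I_n := Ordinal (dd_lt (ltn_ord x) (ltn_ord y)).
have injg : injective g.
  move=> y1 y2 /(congr1 val) /=; rewrite /dd => E; apply: val_inj => /=.
  have := ltn_ord y1; have := ltn_ord y2; have := ltn_ord x.
  move: E; case: ifP; case: ifP; lia.
have -> : [set y : 'I_n | Dp (dd x y)] = g @^-1: [set z : 'I_n | Dp z].
  by apply/setP => y; rewrite !inE.
by rewrite card_preimset // card_nat_pred count_Dp.
Qed.

Lemma card_mt (x : 'I_n) : #|[set y : 'I_n | mt x y]| = (x != 0 :> nat).
Proof.
have hx := ltn_ord x.
have ox := odd_double_half x; have on := odd_double_half n.
case: (eqVneq (x : nat) 0) => [x0|nx0].
  rewrite /=; apply/eqP; rewrite cards_eq0; apply/eqP/setP => y; rewrite !inE /mt x0 /=.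
  by rewrite andbF.
have [y0 hy0] : exists y0 : 'I_n, forall y : 'I_n, mt x y = (y == y0).
  have [ox1|ox1] := boolP (odd x).
    have lt : x.+1 < n by move: ox on; rewrite ox1 nodd; lia.
    exists (Ordinal lt) => y; rewrite /mt ox1 /= -(inj_eq val_inj) /=.
    have oy := odd_double_half y.
    have [oy1|oy1] := boolP (odd y); move: oy; rewrite ?oy1 ?(negbTE oy1) /= ?orbF; last by [].
    move=> oy; apply/idP/idP; [case/orP=> //; move=> /eqP E; move: ox; rewrite ox1; lia|].
    by move=> ->.
  have lt : x.-1 < n by lia.
  exists (Ordinal lt) => y; rewrite /mt (negbTE ox1) /= -(inj_eq val_inj) /=.
  have oy := odd_double_half y.
  have [oy1|oy1] := boolP (odd y); move: oy; rewrite ?oy1 ?(negbTE oy1) /=.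
    move=> oy; apply/eqP/eqP; lia.
  move=> oy; symmetry; apply/negbTE/eqP; move: ox; rewrite (negbTE ox1); lia.
rewrite /=; have -> : [set y : 'I_n | mt x y] = [set y0] by apply/setP => y; rewrite !inE hy0.
by rewrite cards1.
Qed.


Lemma Dp_sym x y : x < n -> y < n -> Dp (dd x y) = Dp (dd y x).
Proof. rewrite /Dp /dd => hx hy; case: ifP; case: ifP; lia. Qed.

Lemma Dp_irr x : Dp (dd x x) = false.
Proof. by rewrite /Dp /dd leqnn subnn. Qed.

Lemma mt_Dp x y : x < n -> y < n -> mt x y -> Dp (dd x y).
Proof.
rewrite /mt /Dp /dd => hx hy /orP[] /andP[_ /eqP ->]; case: ifP; lia.
Qed.

Definition adjR (x y : 'I_n) : bool := Dp (dd x y) && ~~ mt x y.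
Definition rm (x y : nat) := ((x == 0) && (y == 1)) || ((x == 1) && (y == 0)).
Definition adj2 (x y : 'I_n) : bool := adjR x y && ~~ rm x y.

Lemma adjR_sym x y : adjR x y = adjR y x.
Proof. by rewrite /adjR Dp_sym // /mt orbC. Qed.

Lemma adjR_irr x : adjR x x = false.
Proof. by rewrite /adjR Dp_irr. Qed.

Lemma adj2_sym x y : adj2 x y = adj2 y x.
Proof. rewrite /adj2 adjR_sym; congr (_ && ~~ _); rewrite /rm; apply/idP/idP; lia. Qed.

Lemma adj2_irr x : adj2 x x = false.
Proof. by rewrite /adj2 adjR_irr. Qed.

Lemma rm_adj (x y : 'I_n) : rm x y -> adjR x y.
Proof.
rewrite /rm /adjR /Dp /dd /mt => /orP[] /andP[/eqP -> /eqP ->] /=; lia.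
Qed.

Lemma card_rm (x : 'I_n) : #|[set y : 'I_n | rm x y]| = (x <= 1).
Proof.
have h1 : 1 < n by lia.
have h0 : 0 < n by lia.
case: (leqP x 1) => hx /=.
- have [y0 hy0] : exists y0 : 'I_n, forall y : 'I_n, rm x y = (y == y0).
    case: (eqVneq (x : nat) 0) => [x0|x1].
      exists (Ordinal h1) => y; rewrite /rm x0.
      have -> : (y == Ordinal h1) = (val y == 1) by rewrite -val_eqE.
      by rewrite /= orbF.
    exists (Ordinal h0) => y; rewrite /rm.
    have -> : (y == Ordinal h0) = (val y == 0) by rewrite -val_eqE.
    have -> : (x : nat) = 1 by lia.
    by [].
  have -> : [set y : 'I_n | rm x y] = [set y0] by apply/setP => y; rewrite !inE hy0.
  by rewrite cards1.
- apply/eqP; rewrite cards_eq0; apply/eqP/setP => y; rewrite !inE /rm.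
  apply/negbTE; lia.
Qed.

End Conc.

Lemma card_diff (T : finType) (P Q : pred T) : (forall y, Q y -> P y) ->
  #|[set y | P y && ~~ Q y]| = #|[set y | P y]| - #|[set y | Q y]|.
Proof.
move=> hQP.
have -> : [set y | P y && ~~ Q y] = [set y | P y] :\: [set y | Q y].
  by apply/setP => y; rewrite !inE andbC.
rewrite cardsD (setIidPr _) //.
by apply/subsetP => y; rewrite !inE => /hQP.
Qed.

Lemma sum_bool (T : finType) (P : pred T) : \sum_(x : T) (P x : nat) = #|[set x | P x]|.
Proof.
rewrite -sum1dep_card [RHS]big_mkcond /=; apply: eq_bigr => x _; by case: (P x).
Qed.

End Aux.
Import Aux.

Theorem theorem1 (p n : nat) :
  ~~ odd p -> odd n -> 5 <= p.+1 -> p.+1 <= n ->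
  exists e : rel 'I_n,
    [/\ simple_graph e,
        gsize e = (ex n (star_rel p)).+1 &
        ncopies (star_rel p) e = 1].
Proof.
move=> pev nodd hp hpn.
set h := p./2.
have ph : p = h.*2 by have := odd_double_half p; rewrite (negbTE pev) /= add0n.
have h2 : 2 <= h by lia.
have hn : h.*2 < n by lia.
have n0 : 0 < n by lia.
pose gA := [ffun xy : 'I_n * 'I_n => adjR h xy.1 xy.2].
pose gB := [ffun xy : 'I_n * 'I_n => adj2 h xy.1 xy.2].
have relA : forall x y, rel_of gA x y = adjR h x y by move=> x y; rewrite /rel_of ffunE.
have relB : forall x y, rel_of gB x y = adj2 h x y by move=> x y; rewrite /rel_of ffunE.
have sA : simple_graph (rel_of gA).
  apply/andP; split; apply/forallP => x; first by rewrite relA adjR_irr.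
  by apply/forallP => y; rewrite !relA (adjR_sym nodd h2 hn).
have sB : simple_graph (rel_of gB).
  apply/andP; split; apply/forallP => x; first by rewrite relB adj2_irr.
  by apply/forallP => y; rewrite !relB (adj2_sym nodd h2 hn).
have degA : forall x, deg (rel_of gA) x = h.*2 - (x != 0 :> nat).
  move=> x; rewrite /deg.
  have -> : [set y | rel_of gA x y] = [set y : 'I_n | Dp n h (dd n x y) && ~~ mt x y].
    by apply/setP => y; rewrite !inE relA.
  rewrite card_diff; last by move=> y; apply: (mt_Dp nodd h2 hn).
  by rewrite (card_Dp nodd h2 hn) (card_mt nodd h2 hn).
have degB : forall x, deg (rel_of gB) x = h.*2 - (x != 0 :> nat) - (x <= 1).
  move=> x; rewrite /deg.
  have -> : [set y | rel_of gB x y] = [set y : 'I_n | adjR h x y && ~~ rm x y].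
    by apply/setP => y; rewrite !inE relB.
  rewrite card_diff; last by move=> y; apply: (rm_adj nodd h2 hn).
  rewrite (card_rm nodd h2 hn).
  rewrite -degA /deg; congr (_ - _); apply: eq_card => y; by rewrite !inE relA.
have sum_nz : \sum_(x : 'I_n) (x != 0 :> nat) = n - 1.
  rewrite (sum_bool (fun x : 'I_n => (x : nat) != 0)) (card_nat_pred n (fun z => z != 0)).
  have -> : n = 1 + (n - 1) by lia.
  rewrite iotaD count_cat /= add0n (count_all (m := 1)); [lia | move=> i hi; lia].
have sum_le1 : \sum_(x : 'I_n) (x <= 1 : nat) = 2.
  rewrite (sum_bool (fun x : 'I_n => (x : nat) <= 1)) (card_nat_pred n (fun z => z <= 1)).
  have -> : n = 2 + (n - 2) by lia.
  rewrite iotaD count_cat /= add0n (count_none (m := 2)); [lia | move=> i hi; lia].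
have sumA : \sum_x deg (rel_of gA) x + (n - 1) = n * h.*2.
  rewrite -sum_nz -big_split /=.
  rewrite (eq_bigr (fun _ => h.*2)); last by move=> x _; rewrite degA; case: (_ != _) => /=; lia.
  by rewrite big_const_ord iter_addn_0 mulnC.
have sumB : \sum_x deg (rel_of gB) x + (n - 1) + 2 = n * h.*2.
  rewrite -sum_nz -sum_le1 -!big_split /=.
  rewrite (eq_bigr (fun _ => h.*2)); last first.
    move=> x _; rewrite degB; case: (_ != _); case: (_ <= _); rewrite /=; lia.
  by rewrite big_const_ord iter_addn_0 mulnC.
have hsA := handshake sA; have hsB := handshake sB.
have ncB : ncopies (star_rel p) (rel_of gB) = 0.
  apply: (deg_ncopies0 sB) => v; rewrite degB ph.
  have [v0|nv] := eqVneq (v : nat) 0; first by rewrite v0 /=; lia.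
  by case: ((v : nat) <= 1) => /=; lia.
have on := odd_double_half n; rewrite nodd in on.
have exeq : ex n (star_rel p) = gsize (rel_of gB).
  apply/eqP; rewrite eqn_leq; apply/andP; split.
  - apply/bigmax_leqP => g /andP[sg /eqP ng].
    have hd := ncopies0_deg sg ng.
    have hsg := handshake sg.
    have : \sum_x deg (rel_of g) x <= \sum_(x : 'I_n) p.-1.
      by apply: leq_sum => x _; have := hd x; lia.
    rewrite big_const_ord iter_addn_0 hsg -subn1 mulnBl mul1n ph -doubleMl (mulnC h n) => hle.
    move: hle sumB on; rewrite hsB -doubleMr.
    generalize (n * h) => B; lia.
  - by apply: (leq_bigmax_cond (F := fun g => gsize (rel_of g)) gB); rewrite sB ncB.
exists (rel_of gA); split => //.
  move: sumA sumB; rewrite hsA hsB exeq; generalize (n * h.*2) => B; lia.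
apply: (ncopies_one sA (c := Ordinal n0)) => [v|]; rewrite degA.
  case: (eqVneq (v : nat) 0) => [v0|nv0] /=; last by rewrite ph; lia.
  by move=> _; apply: val_inj.
by rewrite /= ph; lia.
Qed.
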